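(* Let $K$ be a finite simplicial complex. If $\gamma\colon C_*(K)\to C_*(\mathbb{R}^d)$ is a homological almost-embedding, then there is a nontrivial equivariant chain map $\tilde{\gamma}\colon C_*(\widetilde{K})\to C_*(\mathbb{S}^{d-1})$.
   Context: Coefficients are $\mathbb{Z}_2$. $C_*(K)$ is the simplicial chain complex, $C_*(\mathbb{R}^d)$ and $C_*(\mathbb{S}^{d-1})$ are singular chain complexes. A chain map is nontrivial if each vertex (0-cell) is sent to a $0$-chain consisting of an odd number of points. A homological almost-embedding of $K$ in $\mathbb{R}^d$ is a nontrivial chain map $C_*(K)\to C_*(\mathbb{R}^d)$ sending disjoint simplices of $K$ to chains with disjoint supports (support = union of images of singular simplices with nonzero coefficient). The deleted product $\widetilde{K}$ is the polyhedral subcomplex of $K\times K$ consisting of cells $\sigma\times\tau$ with $\sigma\cap\tau=\emptyset$, with the free cellular $\mathbb{Z}_2$-action $(x,y)\mapsto(y,x)$; $C_*(\widetilde{K})$ denotes its cellular chain complex. $\mathbb{S}^{d-1}$ carries the antipodal action; equivariance means commuting with the induced actions on chains. *)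

(* Defs.v *)
From HB Require Import structures.
From mathcomp Require Import all_boot all_order all_algebra.
From mathcomp Require Import all_classical all_reals all_analysis.
Set Implicit Arguments. Unset Strict Implicit. Unset Printing Implicit Defensive.
Import Order.TTheory GRing.Theory Num.Theory.
Import numFieldNormedType.Exports.
Local Open Scope classical_set_scope.
Local Open Scope ring_scope.

Definition stdsimplex (R : realType) (n : nat) : set 'rV[R]_n.+1 :=
  [set x | (forall i, 0 <= x 0 i) /\ \sum_i x 0 i = 1].
Arguments stdsimplex : clear implicits.

(* j-th coordinate of a row vector (0 if out of range) *)
Definition vcoord (R : realType) n (x : 'rV[R]_n) (j : nat) : R :=
  match @insub nat (fun k => k < n)%N 'I_n j with Some k => x 0 k | None => 0 end.

Definition vresize (R : realType) n m (x : 'rV[R]_n) : 'rV[R]_m :=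
  \row_(j < m) vcoord x j.
Arguments vresize {R n m} x.

Definition face_map (R : realType) n m (i : nat) (x : 'rV[R]_n) : 'rV[R]_m :=
  \row_(j < m) (if (j < i)%N then vcoord x j
                else if j == i :> nat then 0 else vcoord x j.-1).
Arguments face_map {R n m} i x.

(* To make equality of singular simplices
   literal, the map is normalised to be 0 off the standard simplex. *)
Record Sing (R : realType) (d : nat) (X : set 'rV[R]_d) := MkSing {
  sdim : nat;
  sfun : 'rV[R]_(sdim.+1) -> 'rV[R]_d;
  scont : {within stdsimplex R sdim, continuous sfun};
  sinX : sfun @` stdsimplex R sdim `<=` X;
  sout : forall x, ~ stdsimplex R sdim x -> sfun x = 0 }.
Arguments sdim {R d X}.
Arguments sfun {R d X} s _.

(* A Z_2-chain is represented by a finite list of singular simplices;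
   the coefficient of tau is the parity of its multiplicity. *)
Definition mult (R : realType) d (X : set 'rV[R]_d) (c : seq (Sing X))
  (tau : Sing X) : nat := count (fun s => `[< s = tau >]) c.

Definition chain_eq (R : realType) d (X : set 'rV[R]_d) (c1 c2 : seq (Sing X)) :=
  forall tau, odd (mult c1 tau) = odd (mult c2 tau).

Definition homogeneous (R : realType) d (X : set 'rV[R]_d) (n : nat)
  (c : seq (Sing X)) := all (fun s => sdim s == n) c.

Definition is_face (R : realType) d (X : set 'rV[R]_d) (i : nat)
  (tau sigma : Sing X) : Prop :=
  sdim sigma = (sdim tau).+1 /\
  forall x, stdsimplex R (sdim tau) x -> sfun tau x = sfun sigma (face_map i x).

Definition bdmult (R : realType) d (X : set 'rV[R]_d) (c : seq (Sing X))
  (tau : Sing X) : nat :=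
  (\sum_(s <- c) \sum_(i < (sdim s).+1) `[< is_face i tau s >])%N.

Definition bd_eq (R : realType) d (X : set 'rV[R]_d) (c c' : seq (Sing X)) :=
  forall tau, odd (bdmult c tau) = odd (mult c' tau).

Definition support (R : realType) d (X : set 'rV[R]_d) (c : seq (Sing X))
  : set 'rV[R]_d :=
  [set y | exists s, odd (mult c s) /\ (sfun s @` stdsimplex R (sdim s)) y].

Definition odd_points (R : realType) d (X : set 'rV[R]_d) (c : seq (Sing X)) :=
  odd (size c).

Definition is_antipode (R : realType) d (X : set 'rV[R]_d) (alpha rho : Sing X) :=
  sdim alpha = sdim rho /\ forall x, sfun rho x = - sfun alpha (vresize x).

Definition antipode_mult (R : realType) d (X : set 'rV[R]_d) (c : seq (Sing X))
  (rho : Sing X) : nat := count (fun a => `[< is_antipode a rho >]) c.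

Definition Rspace (R : realType) (d : nat) : set 'rV[R]_d := setT.
Definition sphere (R : realType) (d : nat) : set 'rV[R]_d :=
  [set x | \sum_i x 0 i ^+ 2 = 1].
Arguments Rspace : clear implicits.
Arguments sphere : clear implicits.

Definition simplicial_complex (V : finType) (K : {set {set V}}) :=
  (forall s, s \in K -> s != finset.set0) /\
  (forall s t : {set V}, s \in K -> t \subset s -> t != finset.set0 -> t \in K).

Definition simp_dim (V : finType) (s : {set V}) := #|s|.-1.

Definition sfacets (V : finType) (s : {set V}) : seq {set V} :=
  if (1 < #|s|)%N then [seq s :\ v | v <- enum s] else [::].

Definition simp_chain_map (R : realType) d (X : set 'rV[R]_d) (V : finType)
  (K : {set {set V}}) (g : {set V} -> seq (Sing X)) :=
  forall s, s \in K ->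
    homogeneous (simp_dim s) (g s) /\
    bd_eq (g s) (flatten [seq g t | t <- sfacets s]).

Definition homological_almost_embedding (R : realType) d (V : finType)
  (K : {set {set V}}) (g : {set V} -> seq (Sing (Rspace R d))) :=
  simp_chain_map K g /\
  (forall v, (finset.set1 v) \in K -> odd_points (g (finset.set1 v))) /\
  (forall s t, s \in K -> t \in K -> (s :&: t == finset.set0) ->
     support (g s) `&` support (g t) = set0).

(* cells of the deleted product: s x t with s, t disjoint simplices *)
Definition dcell (V : finType) (K : {set {set V}}) (s t : {set V}) :=
  [/\ s \in K, t \in K & (s :&: t == finset.set0)].

Definition dfacets (V : finType) (s t : {set V}) : seq ({set V} * {set V}) :=
  [seq (f, t) | f <- sfacets s] ++ [seq (s, f) | f <- sfacets t].

Definition nontrivial_equivariant_dchain_map (R : realType) d (V : finType)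
  (K : {set {set V}}) (g : {set V} -> {set V} -> seq (Sing (sphere R d))) :=
  (forall s t, dcell K s t ->
     homogeneous (simp_dim s + simp_dim t) (g s t) /\
     bd_eq (g s t) (flatten [seq g p.1 p.2 | p <- dfacets s t])) /\
  (forall v w, dcell K (finset.set1 v) (finset.set1 w) -> odd_points (g (finset.set1 v) (finset.set1 w))) /\
  (forall s t, dcell K s t ->
     forall rho, odd (mult (g t s) rho) = odd (antipode_mult (g s t) rho)).

(* Main.v *)
From Pilot Require Import Defs.
From HB Require Import structures.
From mathcomp Require Import all_boot all_order all_algebra.
From mathcomp Require Import all_classical all_reals all_analysis.
Set Implicit Arguments. Unset Strict Implicit. Unset Printing Implicit Defensive.
Import Order.TTheory GRing.Theory Num.Theory.
Import numFieldNormedType.Exports.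

Section Parity.
Variable T : eqType.

Definition peq (X Y : seq T) := forall M, odd (count_mem M X) = odd (count_mem M Y).

Lemma sum_by_count (U : seq T) (X : seq T) (g : T -> nat) :
  uniq U -> {subset X <= U} ->
  \sum_(x <- X) g x = \sum_(u <- U) count_mem u X * g u.
Proof.
move=> uU; elim: X => [|a X IH] sXU.
  by rewrite big_nil big1 // => u _; rewrite mul0n.
rewrite big_cons IH; last by move=> x xX; apply: sXU; rewrite inE xX orbT.
have aU : a \in U by apply: sXU; rewrite inE eqxx.
rewrite (bigD1_seq a) //= (bigD1_seq a aU uU) /= eqxx add1n mulSn -addnA.
congr (_ + (_ + _)); apply: eq_bigr => u ua.
by rewrite eq_sym (negbTE ua) add0n.
Qed.

Lemma odd_sum_eq (U : seq T) (f g : T -> nat) :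
  (forall u, odd (f u) = odd (g u)) ->
  odd (\sum_(u <- U) f u) = odd (\sum_(u <- U) g u).
Proof.
move=> fg; elim: U => [|a U IH]; first by rewrite !big_nil.
by rewrite !big_cons !oddD IH fg.
Qed.

Lemma peq_sum (X Y : seq T) (g : T -> nat) : peq X Y ->
  odd (\sum_(x <- X) g x) = odd (\sum_(x <- Y) g x).
Proof.
move=> pXY; set U := undup (X ++ Y).
have uU : uniq U by apply: undup_uniq.
rewrite (@sum_by_count U X) //; last by move=> x xX; rewrite mem_undup mem_cat xX.
rewrite (@sum_by_count U Y) //; last by move=> x xY; rewrite mem_undup mem_cat xY orbT.
by apply: odd_sum_eq => u; rewrite !oddM pXY.
Qed.

Lemma sum_reduce (X : seq T) (g : T -> nat) :
  odd (\sum_(x <- X) g x) = odd (\sum_(x <- X) (if odd (count_mem x X) then g x else 0)).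
Proof.
set U := undup X.
have uU : uniq U by apply: undup_uniq.
have sX : {subset X <= U} by move=> x; rewrite mem_undup.
rewrite (@sum_by_count U X g) // (@sum_by_count U X) //.
apply: odd_sum_eq => u; rewrite !oddM; case: (odd _) => //=.
Qed.

Lemma count_sum (P : pred T) (X : seq T) : count P X = \sum_(x <- X) P x.
Proof. by elim: X => [|a X IH]; rewrite ?big_nil ?big_cons //= IH. Qed.

Lemma peq_refl X : peq X X. Proof. by []. Qed.
Lemma peq_sym X Y : peq X Y -> peq Y X. Proof. by move=> h M; rewrite h. Qed.
Lemma peq_trans X Y Z : peq X Y -> peq Y Z -> peq X Z.
Proof. by move=> h1 h2 M; rewrite h1 h2. Qed.
Lemma peq_cat X X' Y Y' : peq X X' -> peq Y Y' -> peq (X ++ Y) (X' ++ Y').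
Proof. by move=> h1 h2 M; rewrite !count_cat !oddD h1 h2. Qed.
Lemma perm_peq X Y : perm_eq X Y -> peq X Y.
Proof. by move=> /permP h M; rewrite h. Qed.
Lemma peq_self X : peq (X ++ X) [::].
Proof. by move=> M; rewrite count_cat oddD addbb. Qed.

End Parity.

Lemma peq_map (T U : eqType) (f : T -> U) X Y : peq X Y -> peq (map f X) (map f Y).
Proof.
move=> h M; rewrite !count_map !count_sum; exact: peq_sum.
Qed.

Lemma peq_flatten (T U : eqType) (h : T -> seq U) X Y : peq X Y ->
  peq (flatten (map h X)) (flatten (map h Y)).
Proof.
move=> pXY M; rewrite !count_flatten -!map_comp !sumnE !big_map.
exact: peq_sum.
Qed.

Local Notation Vx := (nat * nat)%type.

Definition shA (v : Vx) : Vx := (v.1.+1, v.2).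
Definition shB (v : Vx) : Vx := (v.1, v.2.+1).
Definition cA (L : seq Vx) : seq Vx := (0, 0) :: map shA L.
Definition cB (L : seq Vx) : seq Vx := (0, 0) :: map shB L.
Definition rA j (v : Vx) : Vx := (bump j v.1, v.2).
Definition rB j (v : Vx) : Vx := (v.1, bump j v.2).

Fixpoint S p : nat -> seq (seq Vx) := fix Sq q :=
  match p, q with
  | 0, 0 => [:: [:: (0, 0)]]
  | p'.+1, 0 => map cA (S p' 0)
  | 0, q'.+1 => map cB (Sq q')
  | p'.+1, q'.+1 => map cA (S p' q'.+1) ++ map cB (Sq q')
  end.

Definition SA p q := if p is p'.+1 then map cA (S p' q) else [::].
Definition SB p q := if q is q'.+1 then map cB (S p q') else [::].

Lemma S_unfold p q : 0 < p + q -> S p q = SA p q ++ SB p q.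
Proof. by case: p => [|p]; case: q => [|q] //=; rewrite cats0. Qed.

Definition dropi (i : nat) (L : seq Vx) := take i L ++ drop i.+1 L.
Definition bd (L : seq Vx) := [seq dropi i L | i <- iota 0 (size L)].
Definition BD (X : seq (seq Vx)) := flatten (map bd X).
Definition sumj n (F : nat -> seq (seq Vx)) := flatten [seq F j | j <- iota 0 n].
Definition RA j (X : seq (seq Vx)) := map (map (rA j)) X.
Definition RB j (X : seq (seq Vx)) := map (map (rB j)) X.

Definition EA p q := if p is p'.+1 then sumj p.+1 (fun j => RA j (S p' q)) else [::].
Definition EB p q := if q is q'.+1 then sumj q.+1 (fun j => RB j (S p q')) else [::].
Definition E p q := EA p q ++ EB p q.
Arguments bd : simpl never.
Arguments S : simpl never.
Arguments dropi : simpl never.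
Arguments sumj : simpl never.
Arguments BD : simpl never.

Lemma bd_cons x L : bd (x :: L) = L :: map (cons x) (bd L).
Proof.
rewrite /bd /= -(addn0 1) iotaDl -map_comp; congr (_ :: _).
  by rewrite /dropi /= drop0.
by rewrite -map_comp; apply: eq_map => i /=; rewrite /dropi.
Qed.

Lemma bd_map (f : Vx -> Vx) L : bd (map f L) = map (map f) (bd L).
Proof.
rewrite /bd size_map -map_comp; apply: eq_map => i /=.
by rewrite /dropi map_cat map_take map_drop.
Qed.

Lemma BD_cat X Y : BD (X ++ Y) = BD X ++ BD Y.
Proof. by rewrite /BD map_cat flatten_cat. Qed.

Lemma BD_mapc x (f : Vx -> Vx) X :
  perm_eq (BD (map (fun L => x :: map f L) X))
          (map (map f) X ++ map (fun L => x :: map f L) (BD X)).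
Proof.
elim: X => [|L X IH] //=.
have e1 : BD (map (fun L => x :: map f L) (L :: X)) =
   bd (x :: map f L) ++ BD (map (fun L => x :: map f L) X) by [].
have e2 : BD (L :: X) = bd L ++ BD X by [].
rewrite e1 e2 bd_cons bd_map -map_comp map_cat cat_cons perm_cons.
have -> : [seq (cons x \o map f) i | i <- bd L] = [seq x :: map f L0 | L0 <- bd L].
  by apply: eq_map.
rewrite -(perm_cat2l [seq x :: map f L0 | L0 <- bd L]) in IH.
by rewrite (permPl IH) perm_catCA.
Qed.

Lemma sumjS n F : sumj n.+1 F = F 0 ++ sumj n (fun j => F j.+1).
Proof.
rewrite /sumj /= -(addn0 1) iotaDl -map_comp; congr (_ ++ flatten _).
Qed.

Lemma sumj0 F : sumj 0 F = [::]. Proof. by []. Qed.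

Lemma sumj_nil n : sumj n (fun _ => [::]) = [::].
Proof. by rewrite /sumj; elim: (iota 0 n). Qed.

Lemma map_sumj (g : seq Vx -> seq Vx) n F :
  map g (sumj n F) = sumj n (fun j => map g (F j)).
Proof. by rewrite /sumj map_flatten -map_comp. Qed.

Lemma sumj_cat n F G :
  perm_eq (sumj n (fun j => F j ++ G j)) (sumj n F ++ sumj n G).
Proof.
rewrite /sumj; elim: (iota 0 n) => [|a s IH] //=.
by rewrite -!catA perm_cat2l perm_sym perm_catCA perm_cat2l perm_sym.
Qed.

Lemma eq_sumj n F G : (forall j, F j = G j) -> sumj n F = sumj n G.
Proof. by move=> h; rewrite /sumj; congr flatten; apply: eq_map. Qed.

Lemma RA_cA j X : RA j.+1 (map cA X) = map cA (RA j X).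
Proof.
rewrite /RA -!map_comp; apply: eq_map => L /=.
rewrite /cA /= /rA /= -!map_comp; congr (_ :: _); apply: eq_map => v /=.
by rewrite /shA /bump /= ltnS addnS.
Qed.

Lemma RA_cB j X : RA j.+1 (map cB X) = map cB (RA j.+1 X).
Proof.
rewrite /RA -!map_comp; apply: eq_map => L /=.
by rewrite /cB /= /rA /= -!map_comp; congr (_ :: _).
Qed.

Lemma RB_cB j X : RB j.+1 (map cB X) = map cB (RB j X).
Proof.
rewrite /RB -!map_comp; apply: eq_map => L /=.
rewrite /cB /= /rB /= -!map_comp; congr (_ :: _); apply: eq_map => v /=.
by rewrite /shB /bump /= ltnS addnS.
Qed.

Lemma RB_cA j X : RB j.+1 (map cA X) = map cB (RB j.+1 X) -> True.
Proof. by []. Qed.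

Lemma RB_cA' j X : RB j.+1 (map cA X) = map cA (RB j.+1 X).
Proof.
rewrite /RB -!map_comp; apply: eq_map => L /=.
by rewrite /cA /= /rB /= -!map_comp; congr (_ :: _).
Qed.

Lemma RA0 X : RA 0 X = map (map shA) X.
Proof. by rewrite /RA; apply: eq_map => L; apply: eq_map => v. Qed.
Lemma RB0 X : RB 0 X = map (map shB) X.
Proof. by rewrite /RB; apply: eq_map => L; apply: eq_map => v. Qed.

Lemma RA_cat j X Y : RA j (X ++ Y) = RA j X ++ RA j Y.
Proof. by rewrite /RA map_cat. Qed.
Lemma RB_cat j X Y : RB j (X ++ Y) = RB j X ++ RB j Y.
Proof. by rewrite /RB map_cat. Qed.

Lemma cA_shB X : map cA (map (map shB) X) = map cB (map (map shA) X).
Proof.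
rewrite -!map_comp; apply: eq_map => L /=; rewrite /cA /cB -!map_comp.
by congr (_ :: _); apply: eq_map.
Qed.

Definition XB p q := if p is p'.+1 then if q is q'.+1 then
   sumj p (fun j => map cB (RA j.+1 (S p' q'))) else [::] else [::].
Definition XA p q := if q is q'.+1 then if p is p'.+1 then
   sumj q (fun j => map cA (RB j.+1 (S p' q'))) else [::] else [::].

Lemma EA_split p q : 0 < p -> 0 < p.-1 + q ->
  perm_eq (EA p q) (map (map shA) (S p.-1 q) ++ map cA (EA p.-1 q) ++ XB p q).
Proof.
case: p => // p _ /= pq.
rewrite sumjS RA0 perm_cat2l (S_unfold pq).
under eq_sumj do rewrite RA_cat.
apply: perm_trans (sumj_cat _ _ _) _.
apply: perm_cat.
  case: p pq => [|p] pq /=; first by rewrite sumj_nil.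
  under eq_sumj do rewrite RA_cA.
  by rewrite map_sumj.
case: q pq => [|q] pq /=; first by rewrite sumj_nil.
by case: p pq => [|p] pq; under eq_sumj do rewrite RA_cB.
Qed.

Lemma EB_split p q : 0 < q -> 0 < p + q.-1 ->
  perm_eq (EB p q) (map (map shB) (S p q.-1) ++ XA p q ++ map cB (EB p q.-1)).
Proof.
case: q => // q _ /= pq.
rewrite sumjS RB0 perm_cat2l (S_unfold pq).
under eq_sumj do rewrite RB_cat.
apply: perm_trans (sumj_cat _ _ _) _.
apply: perm_cat.
  case: p pq => [|p] pq /=; first by rewrite sumj_nil.
  by under eq_sumj do rewrite RB_cA'.
case: q pq => [|q] pq /=; first by rewrite sumj_nil.
under eq_sumj do rewrite RB_cB.
by rewrite map_sumj.
Qed.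

Lemma peq_bool (X Y : seq (seq Vx)) :
  (forall M, odd (count_mem M X) = odd (count_mem M Y)) -> peq X Y.
Proof. by []. Qed.

Theorem BD_S p q : 0 < p + q -> peq (BD (S p q)) (E p q).
Proof.
have [n] := ubnP (p + q); elim: n p q => // n IH p q ltn pq.
case: p ltn pq => [|p'] ltn pq; case: q ltn pq => [|q'] ltn pq //.
-
  have eS : S 0 q'.+1 = map cB (S 0 q') by [].
  rewrite eS /E /EA /EB cat0s.
  apply: peq_trans (perm_peq (BD_mapc _ _ _)) _.
  case: q' ltn pq eS => [|q] ltn pq eS; first by apply: perm_peq.
  have IH1 := IH 0 q.+1 ltac:(by rewrite ltnS in ltn) isT.
  apply: peq_trans (peq_cat (peq_refl _) (peq_map cB IH1)) _.
  rewrite sumjS RB0 /E /EA /EB cat0s.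
  rewrite (S_unfold (isT : 0 < 0 + q.+1)) /SA /SB cat0s.
  under [in X in peq _ (_ ++ X)]eq_sumj do rewrite RB_cB.
  by rewrite map_sumj; apply: peq_refl.
-
  have eS : S p'.+1 0 = map cA (S p' 0) by [].
  rewrite eS /E /EA /EB cats0.
  apply: peq_trans (perm_peq (BD_mapc _ _ _)) _.
  case: p' ltn pq eS => [|p] ltn pq eS; first by apply: perm_peq.
  have IH1 := IH p.+1 0 ltac:(by rewrite ltnS in ltn) isT.
  apply: peq_trans (peq_cat (peq_refl _) (peq_map cA IH1)) _.
  rewrite sumjS RA0 /E /EA /EB cats0.
  rewrite (S_unfold (isT : 0 < p.+1 + 0)) /SA /SB cats0.
  under [in X in peq _ (_ ++ X)]eq_sumj do rewrite RA_cA.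
  by rewrite map_sumj; apply: peq_refl.
-
  set p := p'.+1; set q := q'.+1.
  have lt1 : p' + q < n by move: ltn; rewrite /p addSn ltnS.
  have lt2 : p + q' < n by move: ltn; rewrite /q addnS ltnS.
  have h1 : 0 < p' + q by rewrite /q addnS.
  have h2 : 0 < p + q' by rewrite /p addSn.
  have IH1 := IH p' q lt1 h1.
  have IH2 := IH p q' lt2 h2.
  have hA : perm_eq (map cA (EB p' q))
      (map cA (map (map shB) (S p' q')) ++ XA p q).
    rewrite /EB /q sumjS RB0 map_cat perm_cat2l map_sumj /XA /=.
    by under eq_sumj do rewrite -RB_cA'.
  have hB : perm_eq (map cB (EA p q'))
      (map cB (map (map shA) (S p' q')) ++ XB p q).
    rewrite /EA /p sumjS RA0 map_cat perm_cat2l map_sumj /XB /=.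
    by under eq_sumj do rewrite -RA_cB.
  have sA := @EA_split p q isT h1.
  have sB := @EB_split p q isT h2.
  change p.-1 with p' in sA; change q.-1 with q' in sB.
  rewrite cA_shB in hA.
  rewrite (S_unfold pq) BD_cat.
  apply: peq_trans (peq_cat (perm_peq (BD_mapc _ _ _)) (perm_peq (BD_mapc _ _ _))) _.
  apply: peq_trans (peq_cat (peq_cat (peq_refl _) (peq_map cA IH1))
                             (peq_cat (peq_refl _) (peq_map cB IH2))) _.
  rewrite /E.
  move: (EA p' q) (EB p' q) (EA p q') (EB p q') (EA p q) (EB p q) (XA p q) (XB p q) hA hB sA sB.
  move=> ea eb ea' eb' eA eB xa xb hA hB sA sB M.
  move/permP: hA => /(_ (pred1 M)) hA; move/permP: hB => /(_ (pred1 M)) hB.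
  move/permP: sA => /(_ (pred1 M)) sA; move/permP: sB => /(_ (pred1 M)) sB.
  rewrite !map_cat !count_cat hA hB sA sB !count_cat !oddD.
  set b1 := odd (count_mem M _).
  set b2 := odd (count_mem M _).
  set b3 := odd (count_mem M _).
  set b4 := odd (count_mem M _).
  set b5 := odd (count_mem M _).
  set b6 := odd (count_mem M _).
  set b7 := odd (count_mem M _).
  by case: b1; case: b2; case: b3; case: b4; case: b5; case: b6; case: b7.
Qed.

Lemma S_prop p q M : M \in S p q ->
  size M = (p + q).+1 /\ all (fun v : Vx => (v.1 <= p) && (v.2 <= q)) M.
Proof.
have [n] := ubnP (p + q); elim: n p q M => // n IH p q M ltn.
case: (posnP (p + q)) => [pq0|pq].
  move: pq0; case: p ltn => [|p] //; case: q => [|q] // _ _.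
  by rewrite inE => /eqP ->.
rewrite (S_unfold pq) mem_cat => /orP [].
  case: p ltn pq => [|p] ltn pq //= /mapP [L LS ->].
  have [sL aL] := IH p q L ltac:(by rewrite addSn ltnS in ltn) LS.
  split; first by rewrite /= size_map sL.
  rewrite /= /shA; apply/allP => v /mapP [w wL ->] /=.
  by move/allP: aL => /(_ w wL) /andP [h1 h2]; rewrite ltnS h1 h2.
case: q ltn pq => [|q] ltn pq //= /mapP [L LS ->].
have [sL aL] := IH p q L ltac:(by rewrite addnS ltnS in ltn) LS.
split; first by rewrite /= size_map sL addnS.
rewrite /= /shB; apply/allP => v /mapP [w wL ->] /=.
by move/allP: aL => /(_ w wL) /andP [h1 h2]; rewrite ltnS h1 h2.
Qed.

Definition swapv (v : Vx) : Vx := (v.2, v.1).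

Lemma S_swap p q : perm_eq (S q p) (map (map swapv) (S p q)).
Proof.
have [n] := ubnP (p + q); elim: n p q => // n IH p q ltn.
case: (posnP (p + q)) => [pq0|pq].
  move: pq0; case: p ltn => [|p] //; case: q => [|q] // _ _.
have qp : 0 < q + p by rewrite addnC.
rewrite (S_unfold pq) (S_unfold qp) map_cat perm_catC.
apply: perm_cat.
  case: p ltn pq qp => [|p] ltn pq qp //=.
  rewrite -!map_comp.
  have := IH p q ltac:(by rewrite addSn ltnS in ltn).
  move=> /(perm_map cB); rewrite -map_comp.
  have -> : [seq (map swapv \o cA) i | i <- S p q] = [seq (cB \o map swapv) i | i <- S p q].
    apply: eq_map => L /=; rewrite /cA /cB /= -!map_comp; congr (_ :: _).
  by [].
case: q ltn pq qp => [|q] ltn pq qp //=.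
rewrite -!map_comp.
have := IH p q ltac:(by rewrite addnS ltnS in ltn).
move=> /(perm_map cA); rewrite -map_comp.
have -> : [seq (map swapv \o cB) i | i <- S p q] = [seq (cA \o map swapv) i | i <- S p q].
  apply: eq_map => L /=; rewrite /cA /cB /= -!map_comp; congr (_ :: _).
by [].
Qed.

Local Open Scope classical_set_scope.
Local Notation sf := Pilot.Defs.sfun.

Section Geo.
Local Open Scope ring_scope.
Variable R : realType.

Lemma cvg_rowP (T : Type) (F : set_system T) {FF : Filter F} n
   (f : T -> 'rV[R]_n) (l : 'rV[R]_n) :
  (forall j, (fun t => f t 0 j) @ F --> l 0 j) -> f @ F --> l.
Proof.
move=> h; apply/cvg_ballP => e e0.
have : \forall t \near F, forall j, ball (l 0 j) e (f t 0 j).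
  apply: filter_forall => j; exact: (cvg_ballP _ _).1 (h j) e e0.
apply: filterS => t hj; split => // i j.
by rewrite (ord1 i); exact: hj.
Qed.

Lemma cont_sum (T : topologicalType) (I : Type) (r : seq I) (G : I -> T -> R) :
  (forall i, continuous (G i)) -> continuous (fun x => \sum_(i <- r) G i x).
Proof.
move=> hG; elim: r => [|a r IH].
  under eq_fun do rewrite big_nil; exact: cst_continuous.
under eq_fun do rewrite big_cons.
move=> x; apply: cvgD; [exact: hG | exact: IH].
Qed.


Notation Dl n := (stdsimplex R n).

Definition theta (f : nat -> nat) (m N : nat) (x : 'rV[R]_N) : 'rV[R]_m :=
  \row_(j < m) \sum_(k < N) (if f k == j then x 0 k else 0).

Lemma theta_cont f m N : continuous (@theta f m N).
Proof.
move=> x; apply: (@cvg_rowP _ (nbhs x) _ m) => j.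
rewrite /theta.
under eq_fun do rewrite mxE.
rewrite mxE.
have := (@cont_sum _ _ (index_enum 'I_N) (fun k (y : 'rV[R]_N) => if f k == j then y 0 k else 0)).
move=> /(_ _ x) h. apply: h.
move=> k; case: (f k == j); last exact: cst_continuous.
exact: coord_continuous.
Qed.

Lemma theta_ext f g m N (x : 'rV[R]_N) : (forall k, (k < N)%N -> f k = g k) ->
  theta f m x = theta g m x.
Proof.
move=> h; apply/rowP => j; rewrite !mxE; apply: eq_bigr => k _.
by rewrite h.
Qed.

Lemma vcoordE n (x : 'rV[R]_n) (k : 'I_n) : vcoord x k = x 0 k.
Proof.
rewrite /vcoord insubT //= => h; congr (x 0 _); exact: val_inj.
Qed.

Lemma vcoord_out n (x : 'rV[R]_n) k : (n <= k)%N -> vcoord x k = 0.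
Proof. by move=> h; rewrite /vcoord insubF // ltnNge h. Qed.

Lemma face_map_theta i m n (y : 'rV[R]_n) :
  face_map i y = theta (bump i) m y :> 'rV_m.
Proof.
apply/rowP => c; rewrite !mxE.
have sel a : \sum_(k < n) (if (k : nat) == a then y 0 k else 0) = vcoord y a.
  case: (ltnP a n) => an.
    rewrite (bigD1 (Ordinal an)) //= eqxx big1 ?addr0; last first.
      by move=> k /negbTE kn; rewrite -(inj_eq val_inj) /= in kn; rewrite kn.
    by rewrite (vcoordE y (Ordinal an)).
  rewrite vcoord_out // big1 // => k _.
  by case: eqP => // ka; move: (ltn_ord k); rewrite ka ltnNge an.
case: eqP => [ci|/eqP ci].
  rewrite ifF; last by rewrite ci ltnn.
  by rewrite big1 // => k _; rewrite ci; case: eqP => // /eqP; rewrite eq_sym (negbTE (neq_bump _ _)).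
have e k : (bump i k == c) = (k == unbump i c).
  apply/eqP/eqP => [<-|->]; first by rewrite bumpK.
  by rewrite unbumpK // inE eq_sym.
under eq_bigr do rewrite e.
rewrite sel /unbump; case: ltngtP ci => //= ic _.
  by rewrite subn0.
by rewrite subn1.
Qed.


Lemma sum_sel m b (F : nat -> R) :
  \sum_(a < m) (if (a : nat) == b then F a else 0) = if (b < m)%N then F b else 0.
Proof.
case: (ltnP b m) => bm.
  rewrite (bigD1 (Ordinal bm)) //= eqxx big1 ?addr0 //.
  by move=> k /negbTE kn; rewrite -(inj_eq val_inj) /= in kn; rewrite kn.
rewrite big1 // => k _.
by case: eqP => // ka; move: (ltn_ord k); rewrite ka ltnNge bm.
Qed.

Lemma theta_comp f g m m' N (x : 'rV[R]_N) : (forall k, (k < N)%N -> (f k < m)%N) ->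
  theta g m' (theta f m x) = theta (g \o f) m' x.
Proof.
move=> hf; apply/rowP => c; rewrite !mxE.
under eq_bigr => a _ do rewrite mxE.
have e a : (if g a == c then \sum_(k < N) (if f k == a then x 0 k else 0) else 0) =
   \sum_(k < N) (if (a == f k) then (if g (f k) == c then x 0 k else 0) else 0).
  case: eqP => gac.
    apply: eq_bigr => k _; case: eqP => [->|]; first by rewrite gac !eqxx.
    by case: eqP => // ->.
  rewrite big1 // => k _; case: eqP => // ak; rewrite -ak.
  by case: eqP.
under eq_bigr => a _ do rewrite e.
rewrite exchange_big /=; apply: eq_bigr => k _.
by rewrite (sum_sel m (f k) (fun _ => if g (f k) == c then x 0 k else 0)) hf.
Qed.

Lemma theta_simplex f m n (x : 'rV[R]_n.+1) : (forall k, (k < n.+1)%N -> (f k < m.+1)%N) ->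
  Dl n x -> Dl m (theta f m.+1 x).
Proof.
move=> hf [x0 x1]; split.
  move=> i; rewrite mxE; apply: sumr_ge0 => k _; case: ifP => // _; exact: x0.
rewrite -x1.
under eq_bigr => j _ do rewrite mxE.
rewrite exchange_big /=; apply: eq_bigr => k _.
transitivity (\sum_(a < m.+1) (if (a:nat) == f k then x 0 k else 0)).
  by apply: eq_bigr => a _; rewrite eq_sym.
by rewrite (sum_sel m.+1 (f k) (fun _ => x 0 k)) hf.
Qed.


Lemma within_comp (T U W : topologicalType) (A : set T) (B : set U) (h : T -> U) (g : U -> W) x :
  A x -> {for x, continuous h} -> (forall y, A y -> B (h y)) -> {within B, continuous g} ->
  (g \o h) @ within A (nbhs x) --> g (h x).
Proof.
move=> Ax hc hAB gc.
have gB := (subspace_continuousP B g).1 gc (h x) (hAB x Ax).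
apply: (@cvg_comp _ _ _ h g (within A (nbhs x)) (within B (nbhs (h x))) _ _ gB) => P /= BP.
rewrite /within /=.
have := hc _ BP; rewrite /= => hP.
move: hP; apply: (@filterS _ (nbhs x)) => z /= hz Az; exact: hz (hAB z Az).
Qed.

Definition nrm d (v : 'rV[R]_d) := Num.sqrt (\sum_i v 0 i ^+ 2).
Definition gauss d (v : 'rV[R]_d) := (nrm v)^-1 *: v.

Lemma sumsq_ge0 d (v : 'rV[R]_d) : 0 <= \sum_i v 0 i ^+ 2.
Proof. by apply: sumr_ge0 => i _; exact: sqr_ge0. Qed.

Lemma nrm_neq0 d (v : 'rV[R]_d) : v != 0 -> nrm v != 0.
Proof.
move=> vn; rewrite /nrm sqrtr_eq0 -ltNge.
rewrite lt_def sumsq_ge0 andbT; apply/negP => /eqP /psumr_eq0P h.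
move/eqP: vn; apply; apply/rowP => i; rewrite !mxE.
by move/eqP: (h (fun i _ => sqr_ge0 _) i isT); rewrite expf_eq0 /= => /eqP.
Qed.

Lemma gauss_sphere d (v : 'rV[R]_d) : v != 0 -> sphere R d (gauss v).
Proof.
move=> vn; rewrite /sphere /= /gauss.
under eq_bigr do rewrite mxE exprMn.
rewrite -mulr_sumr exprVn /nrm sqr_sqrtr ?sumsq_ge0 // mulVf //.
by have := nrm_neq0 vn; apply: contra => /eqP h; rewrite /nrm h sqrtr0.
Qed.

Lemma gaussN d (v : 'rV[R]_d) : gauss (- v) = - gauss v.
Proof.
rewrite /gauss; have -> : nrm (- v) = nrm v.
  by rewrite /nrm; congr Num.sqrt; apply: eq_bigr => i _; rewrite mxE sqrrN.
by rewrite scalerN.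
Qed.

Lemma nrm_cont d : continuous (@nrm d).
Proof.
move=> w; rewrite /nrm.
apply: (@continuous_comp _ _ _ (fun v : 'rV[R]_d => \sum_i v 0 i ^+ 2) Num.sqrt).
  apply: (@cont_sum _ _ (index_enum 'I_d) (fun i (v : 'rV[R]_d) => v 0 i ^+ 2)).
  move=> i y; exact: (cvgM (@coord_continuous _ 1 d 0 i y) (@coord_continuous _ 1 d 0 i y)).
exact: sqrt_continuous.
Qed.

Lemma gauss_cont d (v : 'rV[R]_d) : v != 0 -> {for v, continuous (@gauss d)}.
Proof.
move=> vn; rewrite /gauss.
exact: (cvgZ (cvgV (nrm_neq0 vn) (@nrm_cont d v)) cvg_id).
Qed.

End Geo.

HB.instance Definition _ (R : realType) d (X : set 'rV[R]_d) := gen_eqMixin (Sing X).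


Section Geo2.
Local Open Scope ring_scope.
Variable R : realType.
Notation Dl n := (stdsimplex R n).

Lemma vresize_id n (x : 'rV[R]_n) : vresize x = x.
Proof. by apply/rowP => j; rewrite mxE vcoordE. Qed.

Lemma Sing_ext d (X : set 'rV[R]_d) (s1 s2 : Sing X) : sdim s1 = sdim s2 ->
  (forall x, Dl (sdim s1) x -> sf s1 x = sf s2 (vresize x)) -> s1 = s2.
Proof.
case: s1 s2 => n1 f1 c1 i1 o1 [n2 f2 c2 i2 o2] /= e; subst n2 => h.
have ef : f1 = f2.
  apply: funext => x; case: (pselect (Dl n1 x)) => Hx.
    by rewrite h // vresize_id.
  by rewrite o1 // o2.
subst f2; congr MkSing; apply: Prop_irrelevance.
Qed.

Variable d : nat.
Implicit Types (sg tu : Sing (Rspace R d)).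

Definition fcfun sg (j : nat) (y : 'rV[R]_(sdim sg).-1.+1) : 'rV[R]_d :=
  if `[< Dl (sdim sg).-1 y >] && (0 < sdim sg)%N then sf sg (face_map j y) else 0.
Arguments fcfun : clear implicits.

Lemma fc_cont sg j : {within Dl (sdim sg).-1, continuous (fcfun sg j)}.
Proof.
case: (posnP (sdim sg)) => [p0|pp].
  apply: (@subspace_eq_continuous _ (Dl (sdim sg).-1) _ (fun _ => (0 : 'rV[R]_d))).
    by move=> y _; rewrite /from_subspace /fcfun (_ : (0 < sdim sg)%N = false) ?andbF // p0.
  exact: cst_continuous.
apply: (@subspace_eq_continuous _ (Dl (sdim sg).-1) _ (sf sg \o face_map j)).
  move=> y; rewrite inE => Hy; rewrite /from_subspace /fcfun pp andbT.
  by case: (asboolP (Dl _ y)).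
apply/subspace_continuousP => x Hx.
apply: (within_comp (B := Dl (sdim sg))) => //.
- move=> z; rewrite (funext (fun y => @face_map_theta R j (sdim sg).+1 _ y)).
  exact: theta_cont.
- move=> y Hy; rewrite face_map_theta.
  apply: theta_simplex => // k hk.
  have hk' : (k < sdim sg)%N by rewrite -(prednK pp).
  by rewrite /bump; case: (j <= k)%N; rewrite ?add1n ?add0n ltnS // ltnW.
- exact: (@Pilot.Defs.scont _ _ _ sg).
Qed.


Arguments fc_cont : clear implicits.
Lemma fc_out sg j y : ~ Dl (sdim sg).-1 y -> fcfun sg j y = 0.
Proof. by rewrite /fcfun; case: asboolP. Qed.
Arguments fc_out : clear implicits.

Definition fc sg j : Sing (Rspace R d) :=
  @MkSing R d (Rspace R d) (sdim sg).-1 (fcfun sg j) (fc_cont sg j)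
    (fun _ _ => I) (@fc_out sg j).

Lemma vcoord_vresize n m (x : 'rV[R]_n) c : n = m ->
  vcoord (vresize x : 'rV[R]_m) c = vcoord x c.
Proof. by move=> e; subst m; rewrite vresize_id. Qed.

Lemma simplex_vresize n m (x : 'rV[R]_n.+1) : n = m -> Dl n x -> Dl m (vresize x).
Proof. by move=> e; subst m; rewrite vresize_id. Qed.

Lemma face_map_vresize n m M j (x : 'rV[R]_n) : n = m ->
  face_map j (vresize x : 'rV[R]_m) = face_map j x :> 'rV[R]_M.
Proof. by move=> e; subst m; rewrite vresize_id. Qed.

Lemma is_face_fc sg ka j : is_face j ka sg <-> (0 < sdim sg)%N /\ ka = fc sg j.
Proof.
split.
  move=> [e h]; have pp : (0 < sdim sg)%N by rewrite e.
  split => //; apply: Sing_ext; first by rewrite /= e.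
  move=> x Hx; rewrite h // /= /fcfun pp andbT.
  have e' : sdim ka = (sdim sg).-1 by rewrite e.
  rewrite asboolT; last exact: simplex_vresize.
  by rewrite face_map_vresize // e'.
move=> [pp ->]; split; first by rewrite /= prednK.
by move=> x Hx; rewrite /= /fcfun pp andbT asboolT.
Qed.


Definition fa (M : seq (nat * nat)) k := (nth (0, 0) M k).1.
Definition fb (M : seq (nat * nat)) k := (nth (0, 0) M k).2.

Definition Fv sg tu (M : seq (nat * nat)) n (x : 'rV[R]_n.+1) : 'rV[R]_d :=
  sf sg (theta (fa M) (sdim sg).+1 x) - sf tu (theta (fb M) (sdim tu).+1 x).
Arguments Fv : clear implicits.

Definition good sg tu (M : seq (nat * nat)) : Prop :=
  [/\ (0 < size M)%N, all (fun v : nat * nat => (v.1 <= sdim sg) && (v.2 <= sdim tu))%N M &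
      forall x, Dl (size M).-1 x -> Fv sg tu M (size M).-1 x != 0].

Definition Tfun sg tu (M : seq (nat * nat)) n (x : 'rV[R]_n.+1) : 'rV[R]_d :=
  if `[< Dl n x >] then gauss (Fv sg tu M n x) else 0.
Arguments Tfun : clear implicits.

Lemma good_bounds sg tu M : good sg tu M -> forall k, (k < (size M).-1.+1)%N ->
  (fa M k < (sdim sg).+1)%N /\ (fb M k < (sdim tu).+1)%N.
Proof.
move=> [s0 al _] k; rewrite prednK // => hk.
move/allP: al => /(_ _ (mem_nth (0, 0) hk)) /andP [h1 h2].
by rewrite /fa /fb !ltnS.
Qed.

Lemma T_cont sg tu M : good sg tu M ->
  {within Dl (size M).-1, continuous Tfun sg tu M (size M).-1}.
Proof.
move=> G.
apply: (@subspace_eq_continuous _ (Dl (size M).-1) _ (@gauss R d \o Fv sg tu M (size M).-1)).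
  by move=> y; rewrite inE => Hy; rewrite /from_subspace /Tfun asboolT.
apply/subspace_continuousP => x Hx.
have [_ _ nz] := G.
apply: continuous_cvg; first exact: gauss_cont (nz x Hx).
apply: cvgB.
  apply: (within_comp (B := Dl (sdim sg))) => //.
  - exact: theta_cont.
  - move=> y Hy; apply: theta_simplex => // k hk; exact: (good_bounds G hk).1.
  - exact: (@Pilot.Defs.scont _ _ _ sg).
apply: (within_comp (B := Dl (sdim tu))) => //.
- exact: theta_cont.
- move=> y Hy; apply: theta_simplex => // k hk; exact: (good_bounds G hk).2.
- exact: (@Pilot.Defs.scont _ _ _ tu).
Qed.
Arguments T_cont : clear implicits.

Lemma T_in sg tu M : good sg tu M ->
  Tfun sg tu M (size M).-1 @` Dl (size M).-1 `<=` sphere R d.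
Proof.
move=> [_ _ nz] _ [x Hx <-]; rewrite /Tfun asboolT //.
exact: gauss_sphere (nz x Hx).
Qed.
Arguments T_in : clear implicits.

Lemma T_out sg tu M n x : ~ Dl n x -> Tfun sg tu M n x = 0.
Proof. by rewrite /Tfun; case: asboolP. Qed.
Arguments T_out : clear implicits.

Definition Tsing sg tu M (G : good sg tu M) : Sing (sphere R d) :=
  @MkSing R d (sphere R d) (size M).-1 (Tfun sg tu M (size M).-1) (T_cont sg tu M G)
    (T_in sg tu M G) (T_out sg tu M (size M).-1).

Definition Tl sg tu M : seq (Sing (sphere R d)) :=
  if pselect (good sg tu M) is left G then [:: Tsing G] else [::].


Lemma Tl_good sg tu M (G : good sg tu M) : Tl sg tu M = [:: Tsing G].
Proof. by rewrite /Tl; case: pselect => // G'; rewrite (Prop_irrelevance G' G). Qed.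

Lemma Tl_bad sg tu M : ~ good sg tu M -> Tl sg tu M = [::].
Proof. by rewrite /Tl; case: pselect. Qed.

Lemma Tfun_vresize sg tu M n n' (x : 'rV[R]_n.+1) : n = n' ->
  Tfun sg tu M n' (vresize x) = Tfun sg tu M n x.
Proof. by move=> e; subst n'; rewrite vresize_id. Qed.

Lemma size_dropi i (M : seq (nat * nat)) : (i < size M)%N -> size (dropi i M) = (size M).-1.
Proof.
move=> h; rewrite /dropi size_cat size_take h size_drop.
by case: (size M) h => // m; rewrite ltnS => h; rewrite subSS addnC subnK.
Qed.

Lemma nth_dropi i (M : seq (nat * nat)) k : (i < size M)%N ->
  nth (0, 0) (dropi i M) k = nth (0, 0) M (bump i k).
Proof.
move=> h; rewrite /dropi nth_cat size_take h.
case: (ltnP k i) => ki.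
  by rewrite nth_take // /bump leqNgt ki add0n.
rewrite nth_drop /bump ki add1n addSn subnKC //.
Qed.

Lemma Fv_face sg tu M i n (x : 'rV[R]_n.+1) : size M = n.+2 -> (i < n.+2)%N ->
  Fv sg tu M n.+1 (face_map i x) = Fv sg tu (dropi i M) n x.
Proof.
move=> sM iM; rewrite /Fv !face_map_theta.
have hb k : (k < n.+1)%N -> (bump i k < n.+2)%N.
  by move=> hk; rewrite /bump; case: (i <= k)%N; rewrite ?add1n ?add0n ltnS // ltnW.
rewrite !theta_comp //; congr (sf sg _ - sf tu _); apply: theta_ext => k hk /=;
  by rewrite /fa /fb nth_dropi // sM.
Qed.

Lemma simplex_face i n (x : 'rV[R]_n.+1) : (i < n.+2)%N -> Dl n x -> Dl n.+1 (face_map i x).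
Proof.
move=> iM Hx; rewrite face_map_theta; apply: theta_simplex => // k hk.
by rewrite /bump; case: (i <= k)%N; rewrite ?add1n ?add0n ltnS // ltnW.
Qed.

Lemma Tfun_face sg tu M i n N (x : 'rV[R]_n.+1) : size M = n.+2 -> (i < n.+2)%N ->
  N = n.+1 -> Dl n x ->
  Tfun sg tu M N (face_map i x) = Tfun sg tu (dropi i M) n x.
Proof.
move=> sM iM eN Hx; subst N.
rewrite /Tfun asboolT; last exact: simplex_face.
by rewrite asboolT // Fv_face.
Qed.

Lemma good_dropi sg tu M i : good sg tu M -> (1 < size M)%N -> (i < size M)%N ->
  good sg tu (dropi i M).
Proof.
move=> [s0 al nz] s1 iM.
have [n sM] : exists n, size M = n.+2.
  by case: (size M) s1 => [|[|n]] // _; exists n.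
have sd : size (dropi i M) = n.+1 by rewrite size_dropi // sM.
split.
- by rewrite sd.
- apply/allP => v; rewrite /dropi mem_cat => /orP [] vM; move/allP: al; apply.
    exact: mem_take vM.
  exact: mem_drop vM.
- rewrite sd /= => x Hx.
  rewrite -Fv_face //; last by rewrite -sM.
  have := nz (face_map i x); rewrite sM /=; apply.
  apply: simplex_face => //; by rewrite -sM.
Qed.

Lemma isface_T sg tu M (G : good sg tu M) i rho : (i < size M)%N ->
  is_face i rho (Tsing G) <-> rho \in Tl sg tu (dropi i M).
Proof.
move=> iM.
case: (ltnP 1 (size M)) => s1; last first.
  have [s0 _ _] := G.
  have e1 : size M = 1 by apply/eqP; rewrite eqn_leq s1 s0.
  rewrite Tl_bad; last first.
    by move=> [h _ _]; move: h; rewrite size_dropi // e1.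
  by split => // [[/= e _]]; move: e; rewrite e1.
have G' := good_dropi G s1 iM.
rewrite (Tl_good G') inE.
have [n sM] : exists n, size M = n.+2.
  by case: (size M) s1 => [|[|n]] // _; exists n.
have sd : size (dropi i M) = n.+1 by rewrite size_dropi // sM.
split.
  move=> [e h]; apply/eqP; apply: Sing_ext.
    by move: e; rewrite /= sM sd /= => -[].
  have er : sdim rho = n by move: e; rewrite /= sM => -[].
  move=> x Hx; rewrite h //= Tfun_vresize; last by rewrite sd.
  apply: Tfun_face => //.
  - by rewrite er.
  - by rewrite er -sM.
move=> /eqP ->; split; first by rewrite /= sM sd.
move=> x Hx /=; rewrite Tfun_face //.
- by rewrite sM sd.
- by rewrite sd -sM.
- by rewrite sM sd.
Qed.

Lemma simplex_face' i n (x : 'rV[R]_n.+1) : Dl n x -> Dl n.+1 (face_map i x).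
Proof.
move=> Hx; rewrite face_map_theta; apply: theta_simplex => // k hk.
by rewrite /bump; case: (i <= k)%N; rewrite ?add1n ?add0n ltnS // ltnW.
Qed.

Definition disj sg tu := forall x y, Dl (sdim sg) x -> Dl (sdim tu) y -> sf sg x != sf tu y.

Lemma disj_fcA sg tu j : (0 < sdim sg)%N -> disj sg tu -> disj (fc sg j) tu.
Proof.
move=> pp D x y Hx Hy /=; rewrite /fcfun pp andbT asboolT //.
apply: D => //; rewrite face_map_theta; apply: theta_simplex => // k hk.
have hk' : (k < sdim sg)%N by rewrite -(prednK pp).
by rewrite /bump; case: (j <= k)%N; rewrite ?add1n ?add0n ltnS // ltnW.
Qed.

Lemma disj_fcB sg tu j : (0 < sdim tu)%N -> disj sg tu -> disj sg (fc tu j).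
Proof.
move=> pp D x y Hx Hy /=; rewrite /fcfun pp andbT asboolT //.
apply: D => //; rewrite face_map_theta; apply: theta_simplex => // k hk.
have hk' : (k < sdim tu)%N by rewrite -(prednK pp).
by rewrite /bump; case: (j <= k)%N; rewrite ?add1n ?add0n ltnS // ltnW.
Qed.

Lemma good_disj sg tu M : (0 < size M)%N ->
  all (fun v : nat * nat => (v.1 <= sdim sg) && (v.2 <= sdim tu))%N M ->
  disj sg tu -> good sg tu M.
Proof.
move=> s0 al D; split => // x Hx; rewrite /Fv subr_eq0; apply: D.
  apply: theta_simplex => // k; rewrite prednK // => hk.
  by move/allP: al => /(_ _ (mem_nth (0, 0) hk)) /andP [h1 h2]; rewrite /fa ltnS.
apply: theta_simplex => // k; rewrite prednK // => hk.
by move/allP: al => /(_ _ (mem_nth (0, 0) hk)) /andP [h1 h2]; rewrite /fb ltnS.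
Qed.

Lemma Tfun_raiseA sg tu L j n (x : 'rV[R]_n.+1) : (0 < sdim sg)%N -> size L = n.+1 ->
  (forall k, (k < n.+1)%N -> (fa L k < (sdim sg).-1.+1)%N) -> Dl n x ->
  Tfun sg tu (map (rA j) L) n x = Tfun (fc sg j) tu L n x.
Proof.
move=> pp sL hb Hx; rewrite /Tfun asboolT //; congr gauss; rewrite /Fv.
congr (_ - _); last first.
  congr (sf tu _); apply: theta_ext => k hk.
  by rewrite /fb (nth_map (0, 0)) // sL.
rewrite /= /fcfun pp andbT asboolT; last by apply: theta_simplex.
rewrite face_map_theta theta_comp //; congr (sf sg _); apply: theta_ext => k hk.
by rewrite /fa (nth_map (0, 0)) // sL.
Qed.

Lemma Tfun_raiseB sg tu L j n (x : 'rV[R]_n.+1) : (0 < sdim tu)%N -> size L = n.+1 ->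
  (forall k, (k < n.+1)%N -> (fb L k < (sdim tu).-1.+1)%N) -> Dl n x ->
  Tfun sg tu (map (rB j) L) n x = Tfun sg (fc tu j) L n x.
Proof.
move=> pp sL hb Hx; rewrite /Tfun asboolT //; congr gauss; rewrite /Fv.
congr (_ - _).
  congr (sf sg _); apply: theta_ext => k hk.
  by rewrite /fa (nth_map (0, 0)) // sL.
rewrite /= /fcfun pp andbT asboolT; last by apply: theta_simplex.
rewrite face_map_theta theta_comp //; congr (sf tu _); apply: theta_ext => k hk.
by rewrite /fb (nth_map (0, 0)) // sL.
Qed.


Lemma Tl_raiseA sg tu L j : (0 < sdim sg)%N -> (0 < size L)%N ->
  all (fun v : nat * nat => (v.1 <= (sdim sg).-1) && (v.2 <= sdim tu))%N L ->
  disj sg tu -> Tl sg tu (map (rA j) L) = Tl (fc sg j) tu L.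
Proof.
move=> pp s0 al D.
have G1 : good sg tu (map (rA j) L).
  apply: good_disj => //; first by rewrite size_map.
  apply/allP => v /mapP [w wL ->] /=.
  move/allP: al => /(_ w wL) /andP [h1 ->]; rewrite andbT.
  rewrite -(prednK pp) /bump; case: (j <= w.1)%N; by rewrite ?add1n ?add0n ?ltnS // ltnW.
have G2 : good (fc sg j) tu L by apply: good_disj => //; exact: disj_fcA.
rewrite (Tl_good G1) (Tl_good G2); congr [:: _]; apply: Sing_ext.
  by rewrite /= size_map.
move=> x Hx /=; rewrite Tfun_vresize; last by rewrite size_map.
apply: Tfun_raiseA => //.
- by rewrite size_map prednK.
- move=> k hk; have [_ al' _] := G2.
  rewrite size_map prednK // in hk.
  by move/allP: al' => /(_ _ (mem_nth (0, 0) hk)) /andP [h1 _]; rewrite /fa ltnS.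
Qed.

Lemma Tl_raiseB sg tu L j : (0 < sdim tu)%N -> (0 < size L)%N ->
  all (fun v : nat * nat => (v.1 <= sdim sg) && (v.2 <= (sdim tu).-1))%N L ->
  disj sg tu -> Tl sg tu (map (rB j) L) = Tl sg (fc tu j) L.
Proof.
move=> pp s0 al D.
have G1 : good sg tu (map (rB j) L).
  apply: good_disj => //; first by rewrite size_map.
  apply/allP => v /mapP [w wL ->] /=.
  move/allP: al => /(_ w wL) /andP [-> h1] /=.
  rewrite -(prednK pp) /bump; case: (j <= w.2)%N; by rewrite ?add1n ?add0n ?ltnS // ltnW.
have G2 : good sg (fc tu j) L by apply: good_disj => //; exact: disj_fcB.
rewrite (Tl_good G1) (Tl_good G2); congr [:: _]; apply: Sing_ext.
  by rewrite /= size_map.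
move=> x Hx /=; rewrite Tfun_vresize; last by rewrite size_map.
apply: Tfun_raiseB => //.
- by rewrite size_map prednK.
- move=> k hk; have [_ al' _] := G2.
  rewrite size_map prednK // in hk.
  by move/allP: al' => /(_ _ (mem_nth (0, 0) hk)) /andP [_ h1]; rewrite /fb ltnS.
Qed.

Lemma nth_swap (M : seq (nat * nat)) k :
  nth (0, 0) (map swapv M) k = swapv (nth (0, 0) M k).
Proof.
case: (ltnP k (size M)) => h; first by rewrite (nth_map (0, 0)).
by rewrite !nth_default ?size_map.
Qed.

Lemma Fv_swap sg tu M n (x : 'rV[R]_n.+1) :
  Fv tu sg (map swapv M) n x = - Fv sg tu M n x.
Proof.
rewrite /Fv opprB; congr (sf tu _ - sf sg _); apply: theta_ext => k _;
  by rewrite /fa /fb nth_swap.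
Qed.

Lemma Tfun_swap sg tu M n (x : 'rV[R]_n.+1) :
  Tfun tu sg (map swapv M) n x = - Tfun sg tu M n x.
Proof.
rewrite /Tfun; case: asboolP => _; last by rewrite oppr0.
by rewrite Fv_swap gaussN.
Qed.

Lemma good_swap sg tu M : good sg tu M -> good tu sg (map swapv M).
Proof.
move=> [s0 al nz]; split.
- by rewrite size_map.
- apply/allP => v /mapP [w wL ->] /=.
  by move/allP: al => /(_ w wL) /andP [-> ->].
- rewrite size_map => x Hx; rewrite Fv_swap oppr_eq0; exact: nz.
Qed.

Lemma swapK (M : seq (nat * nat)) : map swapv (map swapv M) = M.
Proof. by rewrite -map_comp map_id_in // => -[a b]. Qed.

Lemma anti_T sg tu M (G : good sg tu M) rho :
  is_antipode (Tsing G) rho <-> rho \in Tl tu sg (map swapv M).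
Proof.
have G' := good_swap G.
rewrite (Tl_good G') inE; split.
  move=> [e h]; apply/eqP; apply: Sing_ext.
    by rewrite -e /= size_map.
  move=> x Hx; rewrite h /= !Tfun_vresize; first by rewrite Tfun_swap.
  - by rewrite -e /= size_map.
  - by rewrite -e.
move=> /eqP ->; split; first by rewrite /= size_map.
move=> x /=; rewrite Tfun_vresize; first by rewrite Tfun_swap.
by rewrite size_map.
Qed.

End Geo2.

Lemma asbool_eqE (T : eqType) (a b : T) : `[< a = b >] = (a == b).
Proof. by case: eqP => [->|h]; [exact: asboolT | exact: asboolF]. Qed.

Lemma odd_sum_in (T : eqType) (U : seq T) (f g : T -> nat) :
  (forall u, u \in U -> odd (f u) = odd (g u)) ->
  odd (\sum_(u <- U) f u) = odd (\sum_(u <- U) g u).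
Proof.
elim: U => [|a U IH] h; first by rewrite !big_nil.
rewrite !big_cons !oddD h ?inE ?eqxx // IH // => u uU.
by apply: h; rewrite inE uU orbT.
Qed.

Lemma reduce2 (T U : eqType) (A : seq T) (B : seq U) (F G : T -> U -> nat) :
  (forall a b, a \in A -> b \in B -> odd (count_mem a A) -> odd (count_mem b B) ->
     odd (F a b) = odd (G a b)) ->
  odd (\sum_(a <- A) \sum_(b <- B) F a b) = odd (\sum_(a <- A) \sum_(b <- B) G a b).
Proof.
move=> h.
rewrite (sum_reduce A (fun a => \sum_(b <- B) F a b)).
rewrite (sum_reduce A (fun a => \sum_(b <- B) G a b)).
apply: odd_sum_in => a aA; case: ifP => // oa.
rewrite (sum_reduce B (F a)) (sum_reduce B (G a)).
apply: odd_sum_in => b bB; case: ifP => // ob.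
exact: h.
Qed.

Section Main.
Variables (R : realType) (d : nat).
Local Notation Sg := (Sing (Rspace R d)).
Local Notation Ss := (Sing (sphere R d)).

Definition P (A B : seq Sg) : seq Ss :=
  flatten [seq flatten [seq flatten [seq Tl sg tu M | M <- S (sdim sg) (sdim tu)]
                         | tu <- B] | sg <- A].

Lemma sum_P (F : Ss -> nat) A B : \sum_(x <- P A B) F x =
  \sum_(sg <- A) \sum_(tu <- B) \sum_(M <- S (sdim sg) (sdim tu)) \sum_(x <- Tl sg tu M) F x.
Proof.
rewrite /P big_flatten /= big_map; apply: eq_bigr => sg _.
rewrite big_flatten /= big_map; apply: eq_bigr => tu _.
by rewrite big_flatten /= big_map.
Qed.

Lemma multE (X : set 'rV[R]_d) (c : seq (Sing X)) t : mult c t = count_mem t c.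
Proof. by apply: eq_count => s; rewrite asbool_eqE. Qed.

Lemma count_Tl (sg tu : Sg) M rho : count_mem rho (Tl sg tu M) = (rho \in Tl sg tu M).
Proof. by rewrite /Tl; case: pselect => G //=; rewrite inE eq_sym addn0. Qed.


Definition faces (sg : Sg) : seq Sg :=
  if (0 < sdim sg)%N then [seq fc sg j | j <- iota 0 (sdim sg).+1] else [::].

Lemma isface_b (s ka : Sg) j : `[< is_face j ka s >] = (0 < sdim s)%N && (ka == fc s j).
Proof.
apply/idP/idP => [/asboolP/is_face_fc [h ->]|/andP [h /eqP ->]].
  by rewrite h eqxx.
by apply/asboolP/is_face_fc.
Qed.

Lemma bdmult_faces (A : seq Sg) ka : bdmult A ka = count_mem ka (flatten (map faces A)).
Proof.
rewrite /bdmult count_flatten sumnE big_map big_map; apply: eq_bigr => s _.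
under eq_bigr do rewrite isface_b.
rewrite /faces; case: (posnP (sdim s)) => [e|pp].
  by rewrite big1 ?e // => i _; rewrite e.
rewrite count_sum big_map -(big_mkord xpredT (fun j => (ka == fc s j) : nat)).
by rewrite /index_iota subn0; apply: eq_bigr => j _; rewrite eq_sym.
Qed.


Lemma faces_pos (sg : Sg) : (0 < sdim sg)%N ->
  faces sg = [seq fc sg j | j <- iota 0 (sdim sg).+1].
Proof. by rewrite /faces => ->. Qed.

Lemma core sg tu rho : disj sg tu ->
  odd (\sum_(M <- S (sdim sg) (sdim tu)) \sum_(x <- Tl sg tu M)
          \sum_(i < (sdim x).+1) `[< is_face i rho x >])
  = odd (\sum_(ka <- faces sg) \sum_(M <- S (sdim ka) (sdim tu)) count_mem rho (Tl ka tu M)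
       + \sum_(ka <- faces tu) \sum_(M <- S (sdim sg) (sdim ka)) count_mem rho (Tl sg ka M)).
Proof.
move=> D.
have step1 : {in S (sdim sg) (sdim tu), forall M,
  \sum_(x <- Tl sg tu M) \sum_(i < (sdim x).+1) `[< is_face i rho x >] =
  \sum_(N <- bd M) count_mem rho (Tl sg tu N)}.
  move=> M MS; have [sM al] := S_prop MS.
  have G : good sg tu M by apply: good_disj => //; rewrite sM.
  rewrite (Tl_good G) big_cons big_nil addn0 /=.
  have e : (size M).-1.+1 = size M by rewrite prednK // sM.
  rewrite e /bd big_map -(big_mkord xpredT (fun i => `[< is_face i rho (Tsing G) >] : nat)).
  rewrite /index_iota subn0 !big_seq; apply: eq_bigr => i; rewrite mem_iota => /andP [_ hi].
  rewrite count_Tl; congr (nat_of_bool _).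
  by apply/asboolP/idP => [/(isface_T G rho hi).1 | /(isface_T G rho hi).2].
rewrite (eq_big_seq _ step1).
have -> : \sum_(M <- S (sdim sg) (sdim tu)) \sum_(N <- bd M) count_mem rho (Tl sg tu N)
   = \sum_(N <- BD (S (sdim sg) (sdim tu))) count_mem rho (Tl sg tu N).
  by rewrite /BD big_flatten big_map.
have Tl_nil : forall a b : Sg, Tl a b [::] = [::].
  by move=> a b; apply: Tl_bad => -[].
case: (posnP (sdim sg + sdim tu)) => [e|pq].
  move: e => /eqP; rewrite addn_eq0 => /andP [/eqP e1 /eqP e2].
  rewrite /faces e1 e2 /= !big_nil.
  have -> : BD (S 0 0) = [:: [::]] by [].
  by rewrite big_cons big_nil Tl_nil.
rewrite (peq_sum _ (BD_S pq)) /E big_cat !oddD; congr (_ (+) _).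
  congr odd.
  case e: (sdim sg) => [|p']; first by rewrite /faces e !big_nil.
  rewrite faces_pos ?e // /EA /sumj big_flatten !big_map; apply: eq_bigr => j _.
  have ef : sdim (fc sg j) = p' by rewrite /= e.
  rewrite /RA big_map ef; apply: eq_big_seq => L LS.
  have [sL al] := S_prop LS.
  rewrite Tl_raiseA //.
  - by rewrite e.
  - by rewrite sL.
  - by rewrite e.
congr odd.
case e: (sdim tu) => [|q']; first by rewrite /faces e !big_nil.
rewrite faces_pos ?e // /EB /sumj big_flatten !big_map; apply: eq_bigr => j _.
have ef : sdim (fc tu j) = q' by rewrite /= e.
rewrite /RB big_map ef; apply: eq_big_seq => L LS.
have [sL al] := S_prop LS.
rewrite Tl_raiseB //.
- by rewrite e.
- by rewrite sL addnC.
- by rewrite e.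
Qed.


Lemma count_P (A B : seq Sg) rho : count_mem rho (P A B) =
  \sum_(sg <- A) \sum_(tu <- B) \sum_(M <- S (sdim sg) (sdim tu)) count_mem rho (Tl sg tu M).
Proof.
rewrite count_sum sum_P; apply: eq_bigr => sg _; apply: eq_bigr => tu _.
by apply: eq_bigr => M _; rewrite count_sum.
Qed.

Lemma chain_sub (A C : seq Sg) (H : Sg -> nat) : bd_eq A C ->
  odd (\sum_(ka <- C) H ka) = odd (\sum_(sg <- A) \sum_(ka <- faces sg) H ka).
Proof.
move=> bdA.
have pe : peq C (flatten (map faces A)).
  by move=> ka; rewrite -bdmult_faces -multE bdA.
by rewrite (peq_sum _ pe) big_flatten big_map.
Qed.

Lemma disj_supp (A B : seq Sg) sg tu : Pilot.Defs.support A `&` Pilot.Defs.support B = set0 ->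
  odd (count_mem sg A) -> odd (count_mem tu B) -> disj sg tu.
Proof.
move=> H os ot x y Hx Hy; apply/eqP => e.
have : (Pilot.Defs.support A `&` Pilot.Defs.support B) (sf sg x).
  split.
    by exists sg; split; [rewrite multE | exists x].
  by exists tu; split; [rewrite multE | exists y].
by rewrite H.
Qed.

Lemma P_homog (A B : seq Sg) n m : homogeneous n A -> homogeneous m B ->
  homogeneous (n + m) (P A B).
Proof.
move=> /allP hA /allP hB; apply/allP => x.
rewrite /P => /flattenP [X /mapP [sg sgA ->]] /flattenP [Y /mapP [tu tuB ->]].
move=> /flattenP [Z /mapP [M MS ->]].
rewrite /Tl; case: pselect => // G; rewrite inE => /eqP -> /=.
have [sM _] := S_prop MS.
by rewrite sM /= (eqP (hA _ sgA)) (eqP (hB _ tuB)).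
Qed.

Lemma P_bd (A B : seq Sg) (FA FB : seq (seq Sg)) rho :
  bd_eq A (flatten FA) -> bd_eq B (flatten FB) ->
  (forall sg tu, odd (count_mem sg A) -> odd (count_mem tu B) -> disj sg tu) ->
  odd (bdmult (P A B) rho) =
  odd (\sum_(X <- FA) mult (P X B) rho + \sum_(Y <- FB) mult (P A Y) rho).
Proof.
move=> bdA bdB D.
have e1 : odd (\sum_(X <- FA) mult (P X B) rho) = odd (\sum_(sg <- A) \sum_(tu <- B)
    \sum_(ka <- faces sg) \sum_(M <- S (sdim ka) (sdim tu)) count_mem rho (Tl ka tu M)).
  under eq_bigr do rewrite multE count_P.
  rewrite -big_flatten /= (chain_sub _ bdA).
  by congr odd; apply: eq_bigr => sg _; exact: exchange_big.
have e2 : odd (\sum_(Y <- FB) mult (P A Y) rho) = odd (\sum_(sg <- A) \sum_(tu <- B)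
    \sum_(ka <- faces tu) \sum_(M <- S (sdim sg) (sdim ka)) count_mem rho (Tl sg ka M)).
  under eq_bigr do rewrite multE count_P.
  rewrite exchange_big /=; apply: odd_sum_in => sg _.
  by rewrite -big_flatten /= (chain_sub _ bdB).
rewrite oddD e1 e2 -oddD -big_split /=.
under [in RHS]eq_bigr do rewrite -big_split /=.
rewrite /bdmult sum_P.
apply: reduce2 => sg tu _ _ os ot.
exact: core (D _ _ os ot).
Qed.

Lemma anti_P (A B : seq Sg) rho : antipode_mult (P A B) rho = mult (P B A) rho.
Proof.
rewrite multE count_P /antipode_mult count_sum sum_P exchange_big /=.
apply: eq_bigr => tu _; apply: eq_bigr => sg _.
rewrite (perm_big _ (S_swap (sdim sg) (sdim tu))) big_map.
apply: eq_bigr => M _.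
rewrite {1}/Tl; case: pselect => G.
  rewrite big_cons big_nil addn0 count_Tl; congr (nat_of_bool _).
  by apply/asboolP/idP => [/(anti_T G rho).1 | /(anti_T G rho).2].
rewrite big_nil Tl_bad // => G'; apply: G.
by have := good_swap G'; rewrite swapK.
Qed.

Lemma odd_P_vertex (A B : seq Sg) : homogeneous 0 A -> homogeneous 0 B ->
  (forall sg tu, odd (count_mem sg A) -> odd (count_mem tu B) -> disj sg tu) ->
  odd (size A) -> odd (size B) -> odd (size (P A B)).
Proof.
move=> /allP hA /allP hB D oA oB.
rewrite -sum1_size sum_P.
rewrite (@reduce2 _ _ A B _ (fun _ _ => 1)).
  rewrite (eq_bigr (fun=> size B)); last by move=> *; rewrite sum1_size.
  by rewrite big_const_seq count_predT iter_addn_0 oddM oB oA.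
move=> sg tu sgA tuB os ot.
rewrite (eqP (hA _ sgA)) (eqP (hB _ tuB)).
have G : good sg tu [:: (0, 0)].
  by apply: good_disj => //=; exact: D.
have -> : S 0 0 = [:: [:: (0, 0)]] by [].
by rewrite big_cons big_nil (Tl_good G) big_cons big_nil.
Qed.

End Main.

Lemma mult_flatten (R : realType) d (X : set 'rV[R]_d) (Xs : seq (seq (Sing X))) rho :
  mult (flatten Xs) rho = \sum_(c <- Xs) mult c rho.
Proof.
rewrite multE count_flatten sumnE big_map; apply: eq_bigr => c _.
by rewrite multE.
Qed.

Theorem lemma19 (R : realType) (d : nat) (V : finType) (K : {set {set V}})
  (HK : simplicial_complex K)
  (gamma : {set V} -> seq (Sing (Rspace R d)))
  (Hgamma : homological_almost_embedding K gamma) :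
  exists gt : {set V} -> {set V} -> seq (Sing (sphere R d)),
    nontrivial_equivariant_dchain_map K gt.
Proof.
move: Hgamma => [Hcm [Hodd Hdisj]].
exists (fun s t => P (gamma s) (gamma t)).
have Dst : forall s t, dcell K s t -> forall sg tu, odd (count_mem sg (gamma s)) ->
    odd (count_mem tu (gamma t)) -> disj sg tu.
  move=> s t [sK tK st] sg tu; apply: disj_supp; exact: Hdisj.
split; [|split].
- move=> s t Dc; have [sK tK st] := Dc.
  have [hs bs] := Hcm s sK; have [ht bt] := Hcm t tK.
  split; first exact: P_homog.
  move=> rho.
  rewrite (@P_bd _ _ _ _ [seq gamma f | f <- sfacets s] [seq gamma f | f <- sfacets t] rho bs bt (Dst s t Dc)).
  rewrite mult_flatten /dfacets map_cat big_cat -!map_comp !big_map.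
  by [].
- move=> v w Dc; have [vK wK vw] := Dc.
  have [hv _] := Hcm _ vK; have [hw _] := Hcm _ wK.
  rewrite /simp_dim cards1 /= in hv; rewrite /simp_dim cards1 /= in hw.
  apply: odd_P_vertex => //; [exact: (Dst _ _ Dc) | exact: Hodd | exact: Hodd].
- move=> s t Dc rho; by rewrite anti_P.
Qed.
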